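(* Let $(T,f,\sqsubseteq_L)$ be a leaf-ordered merge tree. Then $\mathcal L(\mathcal T((T,f,\sqsubseteq_L)))=(T,f,\sqsubseteq_L)$.
   Context: A merge tree $(T,f)$: a finite rooted tree $T$ identified with its topological realisation, with a continuous $f\colon T\to\mathbb{R}\cup\{\infty\}$ strictly increasing towards the root, $f(v)=\infty$ iff $v$ is the root; lowest leaf at height $0$; $L(T)$ is the set of leaves. $T_x$ is the subtree of descendants of $x$; $\mathrm{lca}$ the lowest common ancestor; $\mathrm{anc}_h(x)$ the unique ancestor of $x$ at height $h\ge f(x)$; $\mathbb{L}_h=\{x:f(x)=h\}$. A layer-order is a family $(\le_h)_{h\ge0}$ of total orders on the $\mathbb{L}_h$ that is consistent ($h_1\le h_2$ and $x_1\le_{h_1}x_2$ imply $\mathrm{anc}_{h_2}(x_1)\le_{h_2}\mathrm{anc}_{h_2}(x_2)$); $(T,f,(\le_h))$ is an ordered merge tree. A leaf-order is a total order $\sqsubseteq_L$ on $L(T)$ such that $u_1\sqsubseteq_L u\sqsubseteq_L u_2$ implies $u\in T_{\mathrm{lca}(u_1,u_2)}$; $(T,f,\sqsubseteq_L)$ is a leaf-ordered merge tree. $\mathcal L((T,f,(\le_h)))=(T,f,\sqsubseteq_L)$ with $u_1\sqsubseteq_L u_2$ iff $\mathrm{anc}_h(u_1)\le_h\mathrm{anc}_h(u_2)$ for $h=\max(f(u_1),f(u_2))$. $\mathcal T((T,f,\sqsubseteq_L))=(T,f,(\le_h))$ with $x_1\le_h x_2$ (for $x_1,x_2\in\mathbb{L}_h$)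 iff $x_1=x_2$ or $u_1\sqsubseteq_L u_2$ for all leaves $u_1\in T_{x_1}$, $u_2\in T_{x_2}$. *)

(* Defs.v *)
From HB Require Import structures.
From mathcomp Require Import all_boot all_order all_algebra.
From mathcomp Require Import reals.
Set Implicit Arguments.
Unset Strict Implicit.
Unset Printing Implicit Defensive.
Import Order.TTheory GRing.Theory Num.Theory.
Local Open Scope ring_scope.

(* A merge tree is encoded combinatorially:
   - a finite vertex type V with a root and a parent map (parent root = root,
     every vertex reaches the root by iterating parent);
   - heights fv v : R of the non-root vertices (the root has height +oo,
     so fv root is irrelevant), strictly increasing towards the root.
   The topological realisation is recovered as the set of points
     None            = the root (height +oo),
     Some (v, h)     = the point of the edge from v (v <> root) to parent v
                       at height h, with fv v <= h < fv (parent v)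
                       (no upper bound if parent v is the root).
   Since f is continuous and strictly increasing along each edge, a point of
   an edge is uniquely determined by its height, so this parametrisation is
   exactly the topological realisation together with f. *)

Section MergeTree.
Variables (R : realType) (V : finType) (root : V) (parent : V -> V)
          (fv : V -> R).

Definition ancV (v w : V) : Prop := exists n, iter n parent v = w.

Definition is_leaf (v : V) : Prop :=
  v <> root /\ forall w, parent w = v -> w = v.

Definition is_merge_tree : Prop :=
  [/\ parent root = root,
      (forall v, ancV v root),
      (forall v, v <> root -> parent v <> root -> fv v < fv (parent v)),
      (exists u, is_leaf u /\ fv u = 0) &
      (forall u, is_leaf u -> 0 <= fv u)].

Definition pt := option (V * R).

Definition valid (p : pt) : bool :=
  match p with
  | None => true
  | Some (v, h) =>
      [&& v != root, fv v <= h & (parent v == root) || (h < fv (parent v))]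
  end.

Definition inLayer (h : R) (p : pt) : bool :=
  valid p && (if p is Some (_, h') then h' == h else false).

Definition ancP (x y : pt) : Prop :=
  match x, y with
  | _, None => True
  | None, Some _ => False
  | Some (v, h), Some (w, h') => h <= h' /\ ancV v w
  end.

Definition leafpt (u : V) : pt := Some (u, fv u).

Definition is_lca (x y z : pt) : Prop :=
  [/\ valid z, ancP x z, ancP y z &
      forall z', valid z' -> ancP x z' -> ancP y z' -> ancP z z'].

Definition is_anc_at (h : R) (x z : pt) : Prop := ancP x z /\ inLayer h z.

Definition is_leaf_order (sq : V -> V -> Prop) : Prop :=
  [/\ (forall u, is_leaf u -> sq u u),
      (forall u1 u2, is_leaf u1 -> is_leaf u2 -> sq u1 u2 -> sq u2 u1 -> u1 = u2),
      (forall u1 u2 u3, is_leaf u1 -> is_leaf u2 -> is_leaf u3 ->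
          sq u1 u2 -> sq u2 u3 -> sq u1 u3),
      (forall u1 u2, is_leaf u1 -> is_leaf u2 -> sq u1 u2 \/ sq u2 u1) &
      (forall u1 u u2, is_leaf u1 -> is_leaf u -> is_leaf u2 ->
          sq u1 u -> sq u u2 ->
          forall z, is_lca (leafpt u1) (leafpt u2) z -> ancP (leafpt u) z)].

Definition toLayer (sq : V -> V -> Prop) (h : R) (x1 x2 : pt) : Prop :=
  x1 = x2 \/
  forall u1 u2, is_leaf u1 -> is_leaf u2 ->
    ancP (leafpt u1) x1 -> ancP (leafpt u2) x2 -> sq u1 u2.

Definition toLeaf (le : R -> pt -> pt -> Prop) (u1 u2 : V) : Prop :=
  let h := Num.max (fv u1) (fv u2) in
  forall y1 y2, is_anc_at h (leafpt u1) y1 -> is_anc_at h (leafpt u2) y2 ->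
    le h y1 y2.

End MergeTree.

(* Main.v *)
Require Import Defs.
From HB Require Import structures.
From mathcomp Require Import all_boot all_order all_algebra.
From mathcomp Require Import reals.
From Stdlib Require Import Classical.
Set Implicit Arguments.
Import Order.TTheory GRing.Theory Num.Theory.
Local Open Scope ring_scope.

Lemma minP (P : nat -> Prop) n : P n -> exists n0, P n0 /\ forall m, P m -> (n0 <= m)%N.
Proof.
elim/ltn_ind: n => n IH Pn.
destruct (classic (exists m, (m < n)%N /\ P m)) as [[m [lt Pm]]|H].
  exact: (IH m lt Pm).
exists n; split => // m Pm; rewrite leqNgt; apply/negP => lt; apply: H; eauto.
Qed.

Lemma iter_root (V : finType) (root : V) (parent : V -> V) n :
  parent root = root -> iter n parent root = root.
Proof. by move=> H; elim: n => //= n ->. Qed.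

Lemma ancV_trans (V : finType) (parent : V -> V) a b c :
  ancV parent a b -> ancV parent b c -> ancV parent a c.
Proof. move=> [n <-] [m <-]; exists (m + n)%N; by rewrite iterD. Qed.

Lemma mono_iter (R : realType) (V : finType) (root : V) (parent : V -> V) (fv : V -> R) :
  is_merge_tree root parent fv ->
  forall k v, iter k.+1 parent v != root -> fv v < fv (iter k.+1 parent v).
Proof.
move=> [Hr _ Hs _ _]; elim=> [|k IH] v Hne.
  have pv : parent v <> root by move=> E; rewrite /= E eqxx in Hne.
  have vr : v <> root by move=> E; rewrite /= E Hr eqxx in Hne.
  exact: Hs.
have E : iter k.+2 parent v = iter k.+1 parent (parent v) by rewrite iterSr.
rewrite E in Hne *.
have pv : parent v <> root by move=> E'; rewrite E' iter_root ?eqxx in Hne.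
have vr : v <> root by move=> E'; rewrite E' Hr iter_root ?eqxx in Hne.
apply: lt_trans (IH _ Hne); exact: Hs.
Qed.

Lemma anc_le (R : realType) (V : finType) (root : V) (parent : V -> V) (fv : V -> R) :
  is_merge_tree root parent fv ->
  forall v w, ancV parent v w -> w != root -> fv v <= fv w.
Proof.
move=> HT v w [[|k] E] Hne; subst w; first exact: lexx.
apply: ltW; exact: (mono_iter HT).
Qed.

Lemma leaf_bottom (V : finType) (root : V) (parent : V -> V) u x :
  is_leaf root parent u -> ancV parent x u -> x = u.
Proof.
move=> [_ Hl] [n]; elim: n x => [|n IH] x //= E.
by apply: IH; apply: Hl.
Qed.

Lemma chain (V : finType) (parent : V -> V) a x y :
  ancV parent a x -> ancV parent a y -> ancV parent x y \/ ancV parent y x.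
Proof.
move=> [n <-] [m <-]; case: (leqP n m) => H.
  left; exists (m - n)%N; by rewrite -iterD subnK.
right; exists (n - m)%N; rewrite -iterD subnK //; exact: ltnW.
Qed.

Lemma layer_uniq (R : realType) (V : finType) (root : V) (parent : V -> V) (fv : V -> R) :
  is_merge_tree root parent fv ->
  forall a v1 v2 h, ancV parent a v1 -> ancV parent a v2 ->
  valid root parent fv (Some (v1, h)) -> valid root parent fv (Some (v2, h)) -> v1 = v2.
Proof.
move=> HT a v1 v2 h A1 A2.
have key : forall x y, ancV parent x y -> valid root parent fv (Some (x, h)) ->
    valid root parent fv (Some (y, h)) -> x = y.
  move=> x y [[|k] E] //= /and3P [xr fx px] /and3P [yr fy py].
  rewrite iterSr in E.
  have pr : parent x != root.
    apply/negP => /eqP P; rewrite P iter_root in E; last by case: HT.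
    by rewrite -E eqxx in yr.
  rewrite (negbTE pr) /= in px.
  have := anc_le HT (ex_intro _ k E) yr.
  move=> H; have := le_trans H fy; by rewrite leNgt px.
case: (chain A1 A2) => H V1 V2; [exact: key| symmetry; exact: key].
Qed.

Lemma exists_layer (R : realType) (V : finType) (root : V) (parent : V -> V) (fv : V -> R) :
  is_merge_tree root parent fv ->
  forall v h, v <> root -> fv v <= h ->
  exists w, ancV parent v w /\ valid root parent fv (Some (w, h)).
Proof.
move=> HT v h vr fvh; have [_ Ha _ _ _] := HT; have [n E] := Ha v.
elim: n v E vr fvh => [|n IH] v E vr fvh; first by exfalso; apply: vr; exact: E.
rewrite iterSr in E.
case: (boolP ((parent v == root) || (h < fv (parent v)))) => C.
  exists v; split; first by exists 0%N.
  apply/and3P; split => //; exact/eqP.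
rewrite negb_or -leNgt in C; case/andP: C => /eqP pr C.
have [w [A Vw]] := IH _ E pr C.
exists w; split => //; apply: ancV_trans A; by exists 1%N.
Qed.

Lemma ancP_trans (R : realType) (V : finType) (parent : V -> V) (x y z : pt R V) :
  ancP parent x y -> ancP parent y z -> ancP parent x z.
Proof.
case: z => [[w h3]|] //; case: y => [[v h2]|] //; case: x => [[u h1]|] //.
move=> [l1 a1] [l2 a2]; split; [exact: le_trans l2| exact: ancV_trans a2].
Qed.

Lemma lca_exists (R : realType) (V : finType) (root : V) (parent : V -> V) (fv : V -> R) :
  is_merge_tree root parent fv ->
  forall a b, exists z, is_lca root parent fv (leafpt fv a) (leafpt fv b) z.
Proof.
move=> HT a b; have HT' := HT; case: HT' => [Hr Ha Hs _ _].
have [n0 [P0 Pm]] : exists n0, ancV parent b (iter n0 parent a) /\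
    forall m, ancV parent b (iter m parent a) -> (n0 <= m)%N.
  have [n En] := Ha a; apply: (@minP _ n); rewrite En; exact: Ha.
set c := iter n0 parent a.
have Ac : ancV parent a c by exists n0.
exists (if c == root then None else Some (c, fv c)).
have minw : forall w, ancV parent a w -> ancV parent b w -> ancV parent c w.
  move=> w [m Em] Bw; have := Pm m; rewrite Em => /(_ Bw) le.
  exists (m - n0)%N; by rewrite /c -iterD subnK.
case: eqP => cr.
  split => //.
  case=> [[w h']|] //= /and3P [wr _ _] [_ Aw] [_ Bw].
  have [k Ek] := minw w Aw Bw; by rewrite cr iter_root // in Ek; rewrite Ek eqxx in wr.
have cr' : c != root by apply/eqP.
split.
- rewrite /= cr' lexx /=; case: eqP => //= /eqP pc; apply: Hs => //; exact/eqP.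
- split => //; exact: (anc_le HT Ac cr').
- split => //; exact: (anc_le HT P0 cr').
- case=> [[w h']|] //= /and3P [wr fw _] [_ Aw] [_ Bw].
  split; last exact: minw.
  apply: le_trans fw; exact: (anc_le HT (minw w Aw Bw) wr).
Qed.

Unset Implicit Arguments.

Theorem lemma9 (R : realType) (V : finType) (root : V) (parent : V -> V)
    (fv : V -> R) (sq : V -> V -> Prop) :
  is_merge_tree root parent fv ->
  is_leaf_order root parent fv sq ->
  forall u1 u2, is_leaf root parent u1 -> is_leaf root parent u2 ->
    (toLeaf root parent fv (toLayer root parent fv sq) u1 u2 <-> sq u1 u2).
Proof.
move=> HT [Hrefl _ _ Htot Hconv] u1 u2 L1 L2.
have HT' := HT; case: HT' => [Hr Ha Hs _ _].
set h := Num.max (fv u1) (fv u2).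
have self : forall u, is_leaf root parent u -> valid root parent fv (Some (u, fv u)).
  move=> u [ur _]; rewrite /= lexx; apply/and3P; split => //; first exact/eqP.
  case: eqP => //= /eqP pu; apply: Hs => //; exact/eqP.
split.
- move=> TL.
  have h1 : fv u1 <= h by rewrite /h le_max lexx.
  have h2 : fv u2 <= h by rewrite /h le_max lexx orbT.
  have [w1 [A1 V1]] := @exists_layer _ _ _ _ _ HT u1 h L1.1 h1.
  have [w2 [A2 V2]] := @exists_layer _ _ _ _ _ HT u2 h L2.1 h2.
  have := TL (Some (w1, h)) (Some (w2, h)).
  case.
  + split; first by split. by rewrite /inLayer V1 eqxx.
  + split; first by split. by rewrite /inLayer V2 eqxx.
  + case=> E; subst w2.
    case: (leP (fv u1) (fv u2)) => Hle.
    * have hE : h = fv u2 by rewrite /h max_r.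
      rewrite hE in V1.
      have := @layer_uniq _ _ _ _ _ HT _ _ _ _ A2 (ex_intro _ 0%N erefl) V1 (self _ L2) => E.
      subst w1; rewrite (leaf_bottom L2 A1); exact: Hrefl.
    * have hE : h = fv u1 by rewrite /h max_l // ltW.
      rewrite hE in V1.
      have := @layer_uniq _ _ _ _ _ HT _ _ _ _ A1 (ex_intro _ 0%N erefl) V1 (self _ L1) => E.
      subst w1; rewrite (leaf_bottom L1 A2); exact: Hrefl.
  + move=> H; apply: H => //; split => //.
- move=> S12; rewrite /toLeaf /= => y1 y2 [anc1 lay1] [anc2 lay2].
  case: y1 anc1 lay1 => [[v1 h1]|] //; case: y2 anc2 lay2 => [[v2 h2]|] //.
  move=> anc2 /andP [Vy2 /eqP e2] anc1 /andP [Vy1 /eqP e1]; subst h1 h2.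
  case: (eqVneq (Some (v1, h)) (Some (v2, h))) => [E|NE]; [by left|right].
  move=> w1 w2 Lw1 Lw2 A1 A2.
  destruct (classic (sq w1 w2)) as [|NS] => //; exfalso.
  have S21 : sq w2 w1 by case: (Htot _ _ Lw1 Lw2).
  have same : forall a, ancP parent (leafpt fv a) (Some (v1, h)) ->
      ancP parent (leafpt fv a) (Some (v2, h)) -> False.
    move=> a [_ B1] [_ B2]; have := @layer_uniq _ _ _ _ _ HT _ _ _ _ B1 B2 Vy1 Vy2 => E.
    by subst v2; rewrite eqxx in NE.
  case: (Htot _ _ L1 Lw2) => S.
  + have [z Hz] := lca_exists HT u1 w1.
    have Az := Hconv _ _ _ L1 Lw2 Lw1 S S21 z Hz.
    case: Hz => _ _ _ /(_ _ Vy1 anc1 A1) zy.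
    apply: (same w2) => //; exact: (@ancP_trans _ _ _ _ _ _ Az zy).
  + have [z Hz] := lca_exists HT w2 u2.
    have Az := Hconv _ _ _ Lw2 L1 L2 S S12 z Hz.
    case: Hz => _ _ _ /(_ _ Vy2 A2 anc2) zy.
    apply: (same u1) => //; exact: (@ancP_trans _ _ _ _ _ _ Az zy).
Qed.
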